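(* Let $S$ be a modal left $E$-monoid, with $e\in E(S)$ and $f\in E$. Then $(e\cdot f)e$ is an idempotent which is a greatest lower bound of $e$ and $f$ in $E(S)$ with respect to $\le_r$ (that is, $(e\cdot f)e\le_r e$, $(e\cdot f)e\le_r f$, and every $g\in E(S)$ with $g\le_r e$ and $g\le_r f$ satisfies $g\le_r (e\cdot f)e$). Moreover, if $s\in S$ satisfies $se=sf=s$, then $s(e\cdot f)e=s$.
   Context: For a semigroup $S$, $E(S)$ is its set of idempotents; for $e,f\in E(S)$, $e\le_r f$ iff $e=ef$ (a quasiorder on $E(S)$). $E\subseteq E(S)$ is right pre-reduced if $e=ef$ and $f=fe$ imply $e=f$ for $e,f\in E$. Let $S$ be a monoid and $1\in E\subseteq E(S)$. $S$ is a modal left $E$-monoid if $E$ is right pre-reduced and (I1') for all $t\in S$, $e\in E$ there is $t\cdot e\in E$ such that for all $s\in S$: $ste=st$ iff $s(t\cdot e)=s$; the (necessarily unique) map $(t,e)\mapsto t\cdot e$ on $S\times E$ is the left $E$-modal operation. *)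

(* Defs.v *)
Record Monoid := {
  carrier :> Type;
  mul : carrier -> carrier -> carrier;
  one : carrier;
  mulA : forall x y z, mul x (mul y z) = mul (mul x y) z;
  mul1l : forall x, mul one x = x;
  mul1r : forall x, mul x one = x
}.

Arguments mul {m} _ _.
Arguments one {m}.

Definition idem {S : Monoid} (e : S) : Prop := mul e e = e.

Definition le_r {S : Monoid} (e f : S) : Prop := e = mul e f.

Definition right_pre_reduced {S : Monoid} (E : S -> Prop) : Prop :=
  forall e f, E e -> E f -> e = mul e f -> f = mul f e -> e = f.

(* S is a modal left E-monoid, with left E-modal operation [dot]
   (t . e = dot t e) *)
Definition modal_left_E_monoid (S : Monoid) (E : S -> Prop)
    (dot : S -> S -> S) : Prop :=
  E one /\
  (forall e, E e -> idem e) /\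
  right_pre_reduced E /\
  (forall t e, E e ->
     E (dot t e) /\
     forall s, mul (mul s t) e = mul s t <-> mul s (dot t e) = s).

(* Main.v *)
Require Import Defs.

Theorem lemma5p6 (S : Monoid) (E : S -> Prop) (dot : S -> S -> S)
  (HS : modal_left_E_monoid S E dot) (e f : S) (He : idem e) (Hf : E f) :
  idem (mul (dot e f) e) /\
  le_r (mul (dot e f) e) e /\
  le_r (mul (dot e f) e) f /\
  (forall g : S, idem g -> le_r g e -> le_r g f -> le_r g (mul (dot e f) e)) /\
  (forall s : S, mul s e = s -> mul s f = s -> mul s (mul (dot e f) e) = s).
Proof.
  destruct HS as [H1 [Hid [Hpr Hdot]]].
  destruct (Hdot e f Hf) as [HdE Hiff].
  unfold idem, le_r in *.
  set (d := dot e f) in *.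
  assert (Hdd : mul d d = d) by (apply Hid; exact HdE).
  assert (H1' : mul (mul d e) f = mul d e) by (apply Hiff; exact Hdd).
  assert (H2 : mul (mul d e) d = mul d e).
  { apply Hiff. rewrite <- (mulA _ d e e), He. exact H1'. }
  assert (Hde : mul (mul d e) (mul d e) = mul d e).
  { rewrite mulA, H2, <- mulA, He. reflexivity. }
  split; [exact Hde|].
  split; [rewrite <- mulA, He; reflexivity|].
  split; [symmetry; exact H1'|].
  split.
  - intros g Hg Hge Hgf.
    assert (Hgd : mul g d = g) by (apply Hiff; rewrite <- Hge; symmetry; exact Hgf).
    rewrite mulA, Hgd. exact Hge.
  - intros s Hse Hsf.
    assert (Hsd : mul s d = s) by (apply Hiff; rewrite Hse; exact Hsf).
    rewrite mulA, Hsd. exact Hse.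
Qed.
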